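(* Suppose A1–A3 and A4' hold and let $\{x_k\}$ be generated by Algorithm 1. Then $\lim_{k\to\infty}\|\nabla f(x_k)\|=0$.
   Context: Let $(X,\langle\cdot,\cdot\rangle)$ be a real Hilbert space with induced norm $\|\cdot\|$, and $f:X\to\mathbb{R}$ Fréchet differentiable with gradient $\nabla f$. Algorithm 1 (general non-monotone descent algorithm): parameters $x_0\in X$, $\alpha_0>0$, $\beta,\rho\in(0,1)$. For $k=0,1,2,\dots$: choose $d_k\in X$ with $\langle\nabla f(x_k),d_k\rangle<0$; then for $l=0,1,2,\dots$ choose a number $\nu_{k,l}\ge 0$ and test $$f(x_k+\alpha_k\beta^l d_k)\le f(x_k)+\rho\alpha_k\beta^l\langle\nabla f(x_k),d_k\rangle+\nu_{k,l};$$ let $l_k$ be the first $l$ for which this holds, set $\nu_k:=\nu_{k,l_k}$, $x_{k+1}=x_k+\alpha_k\beta^{l_k}d_k$ and $\alpha_{k+1}=\alpha_k\beta^{l_k-1}$. It is assumed the algorithm generates infinite sequences (all $l_k$ finite). Assumptions: A1: $\nabla f$ is Lipschitz continuous with constant $L>0$. A2: there is $f_{low}\in\mathbb{R}$ with $f(x)\ge f_{low}$ for all $x\in X$. A3: there are constants $c_1,c_2>0$ with $\langle\nabla f(x_k),d_k\rangle\le -c_1\|\nabla f(x_k)\|^2$ and $\|d_k\|\le c_2\|\nabla f(x_k)\|$ for all $k$. A4': $\nu_k=o(\|\nabla f(x_k)\|^2)$, i.e. for every $\delta>0$ there is $n\in\mathbb{N}$ with $\nu_k\le\delta\|\nabla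 f(x_k)\|^2$ for all $k\ge n$. *)

(* Defs.v *)
From Stdlib Require Import Reals Lra Lia ZArith.
Open Scope R_scope.

Record Hilbert := {
  hcar :> Type;
  hzero : hcar;
  hadd : hcar -> hcar -> hcar;
  hopp : hcar -> hcar;
  hscal : R -> hcar -> hcar;
  hinner : hcar -> hcar -> R;
  hadd_assoc : forall x y z, hadd x (hadd y z) = hadd (hadd x y) z;
  hadd_comm : forall x y, hadd x y = hadd y x;
  hadd_0 : forall x, hadd x hzero = x;
  hadd_opp : forall x, hadd x (hopp x) = hzero;
  hscal_1 : forall x, hscal 1 x = x;
  hscal_assoc : forall a b x, hscal a (hscal b x) = hscal (a * b) x;
  hscal_distr_l : forall a b x, hscal (a + b) x = hadd (hscal a x) (hscal b x);
  hscal_distr_r : forall a x y, hscal a (hadd x y) = hadd (hscal a x) (hscal a y);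
  hinner_sym : forall x y, hinner x y = hinner y x;
  hinner_add : forall x y z, hinner (hadd x y) z = hinner x z + hinner y z;
  hinner_scal : forall a x y, hinner (hscal a x) y = a * hinner x y;
  hinner_pos : forall x, 0 <= hinner x x;
  hinner_def : forall x, hinner x x = 0 -> x = hzero;
  hcomplete : forall u : nat -> hcar,
    (forall eps, eps > 0 -> exists N, forall m n, (m >= N)%nat -> (n >= N)%nat ->
        sqrt (hinner (hadd (u m) (hopp (u n))) (hadd (u m) (hopp (u n)))) < eps) ->
    exists l, forall eps, eps > 0 -> exists N, forall n, (n >= N)%nat ->
        sqrt (hinner (hadd (u n) (hopp l)) (hadd (u n) (hopp l))) < eps
}.

Arguments hzero {h}.
Arguments hadd {h}.
Arguments hopp {h}.
Arguments hscal {h}.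
Arguments hinner {h}.

Definition hnorm {X : Hilbert} (x : X) : R := sqrt (hinner x x).

Definition frechet_gradient {X : Hilbert} (f : X -> R) (g : X -> X) : Prop :=
  forall x : X, forall eps, eps > 0 -> exists delta, delta > 0 /\
    forall h : X, hnorm h < delta ->
      Rabs (f (hadd x h) - f x - hinner (g x) h) <= eps * hnorm h.

Definition armijo_test {X : Hilbert} (f : X -> R) (g : X -> X) (rho : R)
  (xk dk : X) (ak beta nu : R) (l : nat) : Prop :=
  f (hadd xk (hscal (ak * beta ^ l) dk))
    <= f xk + rho * ak * beta ^ l * hinner (g xk) dk + nu.

Definition algorithm1 {X : Hilbert} (f : X -> R) (g : X -> X)
  (x0 : X) (alpha0 beta rho : R)
  (x d : nat -> X) (alpha : nat -> R) (lk : nat -> nat) (nu : nat -> nat -> R) : Prop :=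
  alpha0 > 0 /\ 0 < beta < 1 /\ 0 < rho < 1 /\
  x 0%nat = x0 /\ alpha 0%nat = alpha0 /\
  (forall k, hinner (g (x k)) (d k) < 0) /\
  (forall k l, nu k l >= 0) /\
  (forall k, armijo_test f g rho (x k) (d k) (alpha k) beta (nu k (lk k)) (lk k)) /\
  (forall k l, (l < lk k)%nat ->
      ~ armijo_test f g rho (x k) (d k) (alpha k) beta (nu k l) l) /\
  (forall k, x (S k) = hadd (x k) (hscal (alpha k * beta ^ (lk k)) (d k))) /\
  (forall k, alpha (S k) = alpha k * powerRZ beta (Z.of_nat (lk k) - 1)).

(* Main.v *)
Require Import Defs.
From Stdlib Require Import Reals Lra Lia ZArith.
Open Scope R_scope.

Section H.
Context {X : Hilbert}.

Lemma inner_zero_l (y : X) : hinner hzero y = 0.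
Proof.
  assert (E := hinner_add X hzero hzero y). rewrite hadd_0 in E. lra.
Qed.

Lemma inner_opp_l (x y : X) : hinner (hopp x) y = - hinner x y.
Proof.
  assert (E := hinner_add X x (hopp x) y). rewrite hadd_opp, inner_zero_l in E. lra.
Qed.

Lemma inner_add_r (x y z : X) : hinner x (hadd y z) = hinner x y + hinner x z.
Proof. rewrite hinner_sym, hinner_add, (hinner_sym X y), (hinner_sym X z). ring. Qed.

Lemma inner_scal_r (a : R) (x y : X) : hinner x (hscal a y) = a * hinner x y.
Proof. rewrite hinner_sym, hinner_scal, (hinner_sym X y). ring. Qed.

Lemma scal0 (d : X) : hscal 0 d = hzero.
Proof.
  set (z := hscal 0 d).
  assert (E : z = hadd z z). { unfold z. rewrite <- hscal_distr_l. f_equal. ring. }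
  transitivity (hadd (hadd z z) (hopp z)).
  - rewrite <- hadd_assoc, hadd_opp, hadd_0. reflexivity.
  - rewrite <- E. apply hadd_opp.
Qed.

Lemma norm_nonneg (x : X) : 0 <= hnorm x.
Proof. apply sqrt_pos. Qed.

Lemma norm_sq (x : X) : hnorm x ^ 2 = hinner x x.
Proof. unfold hnorm. rewrite <- Rsqr_pow2. apply Rsqr_sqrt, hinner_pos. Qed.

Lemma norm_scal (c : R) (d : X) : hnorm (hscal c d) = Rabs c * hnorm d.
Proof.
  unfold hnorm. rewrite hinner_scal, inner_scal_r, <- Rmult_assoc.
  rewrite sqrt_mult_alt by (apply Rle_0_sqr). fold (Rsqr c). rewrite sqrt_Rsqr_abs. reflexivity.
Qed.

Lemma diff_eq (x d : X) (c : R) :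
  forall z, hinner (hadd (hadd x (hscal c d)) (hopp x)) z = c * hinner d z.
Proof. intro z. rewrite !hinner_add, inner_opp_l, hinner_scal. ring. Qed.

Lemma norm_diff (x d : X) (c : R) :
  hnorm (hadd (hadd x (hscal c d)) (hopp x)) = Rabs c * hnorm d.
Proof.
  rewrite <- norm_scal. unfold hnorm. f_equal.
  rewrite diff_eq, hinner_sym, diff_eq, hinner_scal, inner_scal_r. ring.
Qed.

Lemma cauchy_schwarz (u v : X) : hinner u v <= hnorm u * hnorm v.
Proof.
  set (a := hinner u u). set (b := hinner u v). set (cc := hinner v v).
  assert (Q : forall t, 0 <= a + 2 * t * b + t * t * cc).
  { intro t. assert (P := hinner_pos X (hadd u (hscal t v))).
    rewrite hinner_add, !inner_add_r, !hinner_scal, !inner_scal_r in P.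
    rewrite (hinner_sym X v u) in P. unfold a, b, cc. lra. }
  assert (Ha : 0 <= a) by apply hinner_pos.
  assert (Hc : 0 <= cc) by apply hinner_pos.
  assert (B2 : b * b <= a * cc).
  { destruct (Req_dec cc 0) as [E|E].
    - rewrite E. destruct (Req_dec b 0) as [Eb|Eb]. { rewrite Eb. lra. }
      exfalso. specialize (Q (- (a + 1) / (2 * b))). rewrite E in Q.
      replace (a + 2 * (- (a + 1) / (2 * b)) * b + - (a + 1) / (2 * b) * (- (a + 1) / (2 * b)) * 0) with (-1) in Q by (field; auto). lra.
    - specialize (Q (- b / cc)).
      replace (a + 2 * (- b / cc) * b + - b / cc * (- b / cc) * cc) with ((a * cc - b * b) / cc) in Q by (field; auto).
      assert (0 < cc) by lra.
      apply Rmult_le_compat_r with (r := cc) in Q; [|lra].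
      unfold Rdiv in Q. rewrite Rmult_assoc, Rinv_l in Q by lra. lra. }
  unfold hnorm. fold a. fold cc.
  destruct (Rle_dec b 0). { apply Rle_trans with 0; auto. apply Rmult_le_pos; apply sqrt_pos. }
  rewrite <- sqrt_mult_alt by auto.
  replace b with (sqrt (b * b)) at 1. 2:{ apply sqrt_square. lra. }
  apply sqrt_le_1; nra.
Qed.

End H.

Lemma phi_deriv {X : Hilbert} (f : X -> R) (g : X -> X) (Hgrad : frechet_gradient f g)
  (x d : X) (s : R) :
  derivable_pt_lim (fun t => f (hadd x (hscal t d))) s (hinner (g (hadd x (hscal s d))) d).
Proof.
  intros eps Heps.
  set (y := hadd x (hscal s d)).
  set (N := hnorm d).
  assert (HN : 0 <= N) by apply norm_nonneg.
  destruct (Hgrad y (eps / (2 * (N + 1)))) as [del [Hdel H]].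
  { apply Rdiv_lt_0_compat; lra. }
  assert (Hp : 0 < del / (N + 1)) by (apply Rdiv_lt_0_compat; lra).
  exists (mkposreal _ Hp). simpl. intros h Hh0 Hh.
  assert (Eq : hadd x (hscal (s + h) d) = hadd y (hscal h d)).
  { unfold y. rewrite <- hadd_assoc, <- hscal_distr_l. reflexivity. }
  rewrite Eq.
  assert (Hn : hnorm (hscal h d) < del).
  { rewrite norm_scal. fold N.
    apply Rle_lt_trans with (Rabs h * (N + 1)). { apply Rmult_le_compat_l; [apply Rabs_pos|lra]. }
    apply Rmult_lt_reg_r with (/ (N + 1)). { apply Rinv_0_lt_compat; lra. }
    rewrite Rmult_assoc, Rinv_r by lra. lra. }
  specialize (H _ Hn). rewrite norm_scal, inner_scal_r in H. fold N in H.
  assert (Ha : 0 < Rabs h) by (apply Rabs_pos_lt; auto).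
  replace ((f (hadd y (hscal h d)) - f y) / h - hinner (g y) d)
    with ((f (hadd y (hscal h d)) - f y - h * hinner (g y) d) / h) by (field; auto).
  unfold Rdiv at 1. rewrite Rabs_mult, Rabs_inv.
  apply Rmult_lt_reg_r with (Rabs h); auto.
  rewrite Rmult_assoc, Rinv_l by lra.
  apply Rle_lt_trans with (eps / (2 * (N + 1)) * (Rabs h * N)). { rewrite Rmult_1_r. exact H. }
  assert (eps / (2 * (N + 1)) * (Rabs h * N) <= eps / 2 * Rabs h).
  { unfold Rdiv. rewrite Rinv_mult.
    replace (eps * (/ 2 * / (N + 1)) * (Rabs h * N)) with (eps * / 2 * Rabs h * (N / (N + 1))) by (field; lra).
    rewrite <- (Rmult_1_r (eps * / 2 * Rabs h)) at 2.
    apply Rmult_le_compat_l. { apply Rmult_le_pos; [|lra]. apply Rmult_le_pos; lra. }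
    apply Rmult_le_reg_r with (N + 1); [lra|]. unfold Rdiv. rewrite Rmult_assoc, Rinv_l; lra. }
  assert (0 < eps * Rabs h) by (apply Rmult_lt_0_compat; lra).
  lra.
Qed.

Lemma descent {X : Hilbert} (f : X -> R) (g : X -> X) (Hgrad : frechet_gradient f g)
  (L : R) (HL : L > 0)
  (HA1 : forall y z : X, hnorm (hadd (g y) (hopp (g z))) <= L * hnorm (hadd y (hopp z)))
  (x d : X) (s : R) (Hs : 0 < s) :
  f (hadd x (hscal s d)) <= f x + s * hinner (g x) d + L * s ^ 2 * hnorm d ^ 2.
Proof.
  destruct (MVT_cor2 (fun t => f (hadd x (hscal t d)))
             (fun t => hinner (g (hadd x (hscal t d))) d) 0 s Hs) as [c [E Hc]].
  { intros c _. apply phi_deriv; auto. }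
  simpl in E. rewrite scal0, hadd_0 in E.
  set (y := hadd x (hscal c d)) in *.
  assert (CS := cauchy_schwarz (hadd (g y) (hopp (g x))) d).
  rewrite hinner_add, inner_opp_l in CS.
  assert (Lip := HA1 y x). unfold y in Lip. rewrite norm_diff in Lip. fold y in Lip.
  rewrite Rabs_right in Lip by lra.
  assert (HN := norm_nonneg d).
  assert (Hg := norm_nonneg (hadd (g y) (hopp (g x)))).
  assert (K : hinner (g y) d <= hinner (g x) d + L * s * hnorm d ^ 2).
  { assert (hnorm (hadd (g y) (hopp (g x))) * hnorm d <= L * (c * hnorm d) * hnorm d)
      by (apply Rmult_le_compat_r; auto).
    assert (L * (c * hnorm d) * hnorm d <= L * s * (hnorm d * hnorm d)).
    { replace (L * (c * hnorm d) * hnorm d) with ((L * c) * (hnorm d * hnorm d)) by ring.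
      apply Rmult_le_compat_r; [nra|]. nra. }
    simpl. nra. }
  assert (f (hadd x (hscal s d)) - f x <= (hinner (g x) d + L * s * hnorm d ^ 2) * s).
  { rewrite E, Rminus_0_r. apply Rmult_le_compat_r; lra. }
  simpl in *. nra.
Qed.

Theorem theorem4 (X : Hilbert) (f : X -> R) (g : X -> X)
  (x0 : X) (alpha0 beta rho : R)
  (x d : nat -> X) (alpha : nat -> R) (lk : nat -> nat) (nu : nat -> nat -> R)
  (Hgrad : frechet_gradient f g)
  (Halg : algorithm1 f g x0 alpha0 beta rho x d alpha lk nu)
  (* A1 *)
  (L : R) (HL : L > 0)
  (HA1 : forall y z : X, hnorm (hadd (g y) (hopp (g z))) <= L * hnorm (hadd y (hopp z)))
  (* A2 *)
  (flow : R) (HA2 : forall y : X, f y >= flow)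
  (* A3 *)
  (c1 c2 : R) (Hc1 : c1 > 0) (Hc2 : c2 > 0)
  (HA3 : forall k, hinner (g (x k)) (d k) <= - c1 * hnorm (g (x k)) ^ 2 /\
                   hnorm (d k) <= c2 * hnorm (g (x k)))
  (* A4' *)
  (HA4 : forall delta, delta > 0 -> exists n : nat, forall k, (k >= n)%nat ->
           nu k (lk k) <= delta * hnorm (g (x k)) ^ 2) :
  Un_cv (fun k => hnorm (g (x k))) 0.
Proof.
  destruct Halg as (Ha0 & Hb & Hr & Hx0 & Hal0 & Hneg & Hnu & Harm & Hfail & Hx & Hal).
  set (tau := (1 - rho) * c1 / (L * c2 ^ 2)).
  assert (Htau : 0 < tau).
  { unfold tau. apply Rdiv_lt_0_compat. apply Rmult_lt_0_compat; lra.
    apply Rmult_lt_0_compat; [lra|]. apply pow_lt; lra. }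
  assert (Fb : forall k l, (l < lk k)%nat -> 0 < alpha k -> alpha k * beta ^ l > tau).
  { intros k l Hl Hak.
    set (s := alpha k * beta ^ l).
    assert (Hs : 0 < s) by (apply Rmult_lt_0_compat; [lra| apply pow_lt; lra]).
    assert (F := Hfail k l Hl). unfold armijo_test in F.
    apply Rnot_le_lt in F.
    assert (Dn := descent f g Hgrad L HL HA1 (x k) (d k) s Hs).
    fold s in F. replace (rho * alpha k * beta ^ l) with (rho * s) in F by (unfold s; ring).
    assert (Hn := Hnu k l).
    destruct (HA3 k) as [HG HD].
    set (G := hinner (g (x k)) (d k)) in *.
    set (n := hnorm (g (x k))) in *.
    set (Nd := hnorm (d k)) in *.
    assert (HNd : 0 <= Nd) by apply norm_nonneg.
    assert (Hnn : 0 <= n) by apply norm_nonneg.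
    assert (K1 : 0 < (1 - rho) * G + L * s * Nd ^ 2).
    { apply Rmult_lt_reg_l with s; auto. rewrite Rmult_0_r. nra. }
    assert (K2 : Nd ^ 2 <= c2 ^ 2 * n ^ 2).
    { rewrite <- Rpow_mult_distr. apply pow_incr. lra. }
    assert (K3 : (1 - rho) * c1 * n ^ 2 < L * s * c2 ^ 2 * n ^ 2).
    { assert ((1 - rho) * G <= (1 - rho) * (- c1 * n ^ 2)) by (apply Rmult_le_compat_l; lra).
      assert (L * s * Nd ^ 2 <= L * s * (c2 ^ 2 * n ^ 2)).
      { apply Rmult_le_compat_l; [|lra]. apply Rmult_le_pos; lra. }
      lra. }
    assert (K4 : (1 - rho) * c1 < s * (L * c2 ^ 2)).
    { destruct (Rlt_le_dec ((1 - rho) * c1) (s * (L * c2 ^ 2))) as [|H']; auto.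
      exfalso. assert (0 <= n ^ 2) by (apply pow_le; auto).
      assert (s * (L * c2 ^ 2) * n ^ 2 <= (1 - rho) * c1 * n ^ 2) by (apply Rmult_le_compat_r; auto).
      lra. }
    unfold tau. apply Rlt_gt. apply Rmult_lt_reg_r with (L * c2 ^ 2).
    { apply Rmult_lt_0_compat; [lra|]. apply pow_lt; lra. }
    unfold Rdiv. rewrite Rmult_assoc, Rinv_l. lra.
    assert (0 < L * c2 ^ 2) by (apply Rmult_lt_0_compat; [lra|]; apply pow_lt; lra). lra. }
  set (m := Rmin alpha0 tau).
  assert (Hm : 0 < m) by (unfold m; apply Rmin_pos; lra).
  assert (Inv : forall k, alpha k >= m /\ alpha k > 0).
  { induction k as [|k [IH1 IH2]].
    - rewrite Hal0. split; [|lra]. unfold m. apply Rle_ge, Rmin_l.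
    - rewrite Hal. destruct (lk k) as [|l] eqn:E.
      + simpl. rewrite Rmult_1_r.
        assert (1 < / beta) by (rewrite <- Rinv_1; apply Rinv_lt_contravar; lra).
        split; nra.
      + replace (Z.of_nat (S l) - 1)%Z with (Z.of_nat l) by lia.
        rewrite <- pow_powerRZ.
        assert (T := Fb k l ltac:(lia) IH2).
        assert (tau >= m) by (unfold m; apply Rle_ge, Rmin_r). lra. }
  assert (Tk : forall k, alpha k * beta ^ lk k = beta * alpha (S k)).
  { intro k. rewrite Hal. destruct (lk k) as [|l].
    - simpl. field. lra.
    - replace (Z.of_nat (S l) - 1)%Z with (Z.of_nat l) by lia.
      rewrite <- pow_powerRZ. simpl. ring. }
  set (delta := rho * c1 * beta * m / 2).
  assert (Hdel : delta > 0).
  { unfold delta. assert (0 < rho * c1 * beta * m).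
    { repeat apply Rmult_lt_0_compat; lra. } lra. }
  assert (Dec : forall k, f (x (S k)) <= f (x k) - 2 * delta * hnorm (g (x k)) ^ 2 + nu k (lk k)).
  { intro k. assert (A := Harm k). unfold armijo_test in A. rewrite <- Hx in A.
    replace (rho * alpha k * beta ^ lk k) with (rho * (alpha k * beta ^ lk k)) in A by ring.
    rewrite Tk in A.
    destruct (HA3 k) as [HG _].
    destruct (Inv (S k)) as [I1 I2].
    set (G := hinner (g (x k)) (d k)) in *.
    set (n := hnorm (g (x k))) in *.
    assert (0 <= n ^ 2) by (apply pow_le, norm_nonneg).
    assert (rho * (beta * alpha (S k)) * G <= rho * (beta * alpha (S k)) * (- c1 * n ^ 2)).
    { apply Rmult_le_compat_l; [|lra]. repeat apply Rmult_le_pos; lra. }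
    assert (rho * (beta * m) * (c1 * n ^ 2) <= rho * (beta * alpha (S k)) * (c1 * n ^ 2)).
    { apply Rmult_le_compat_r. apply Rmult_le_pos; lra.
      apply Rmult_le_compat_l; [lra|]. apply Rmult_le_compat_l; lra. }
    unfold delta. lra. }
  destruct (HA4 delta Hdel) as [n0 Hn0].
  assert (Dec2 : forall k, (k >= n0)%nat -> f (x (S k)) <= f (x k) - delta * hnorm (g (x k)) ^ 2).
  { intros k Hk. specialize (Hn0 k Hk). specialize (Dec k). lra. }
  set (u := fun j => f (x (n0 + j)%nat)).
  assert (Ud : Un_decreasing u).
  { intro j. unfold u. rewrite Nat.add_succ_r.
    assert (0 <= hnorm (g (x (n0 + j)%nat)) ^ 2) by (apply pow_le, norm_nonneg).
    assert (Dk := Dec2 (n0 + j)%nat ltac:(lia)).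
    assert (0 <= delta * hnorm (g (x (n0 + j)%nat)) ^ 2) by (apply Rmult_le_pos; lra).
    lra. }
  assert (Ulb : has_lb u).
  { exists (- flow). intros y [i Hi]. rewrite Hi. unfold opp_seq, u.
    specialize (HA2 (x (n0 + i)%nat)). lra. }
  destruct (decreasing_cv u Ud Ulb) as [l Hl].
  intros eps Heps.
  assert (He : delta * eps ^ 2 / 2 > 0).
  { assert (0 < delta * eps ^ 2) by (apply Rmult_lt_0_compat; [lra| apply pow_lt; lra]). lra. }
  destruct (Hl _ He) as [N HN].
  exists (n0 + N)%nat. intros k Hk.
  unfold R_dist. rewrite Rminus_0_r, Rabs_right by (apply Rle_ge, norm_nonneg).
  assert (H1 := HN (k - n0)%nat ltac:(lia)).
  assert (H2 := HN (S (k - n0))%nat ltac:(lia)).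
  unfold u, R_dist in H1, H2.
  replace (n0 + (k - n0))%nat with k in H1 by lia.
  replace (n0 + S (k - n0))%nat with (S k) in H2 by lia.
  assert (Dk := Dec2 k ltac:(lia)).
  apply Rabs_def2 in H1. apply Rabs_def2 in H2.
  set (n := hnorm (g (x k))) in *.
  assert (Hnn : 0 <= n) by apply norm_nonneg.
  assert (Q : delta * n ^ 2 < delta * eps ^ 2) by lra.
  apply Rmult_lt_reg_l in Q; [|lra].
  destruct (Rlt_le_dec n eps) as [|H']; auto.
  exfalso. assert (eps ^ 2 <= n ^ 2) by (apply pow_incr; lra). lra.
Qed.
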